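(* Let $k$ be a field of characteristic zero, $n\ge1$, $S=k[x_1,\ldots,x_n]$, and $(S,L)$ a triangularizable Lie–Rinehart algebra with basis $\alpha_1,\ldots,\alpha_n$ and enveloping algebra $U$. If $p>0$ and $u\in F_pU$ satisfy $d^0(u)\equiv0\pmod{F_{p-2}\mathcal{X}^1}$, then $u\in F_{p-1}U$.
   Context: Triangularizable: $L\subseteq\operatorname{Der}(S)$ is an $S$-submodule and Lie subalgebra which is a free $S$-module with basis of derivations $\alpha_1,\ldots,\alpha_n$ such that $\alpha_i(x_j)=0$ for $i>j$ and $\alpha_1(x_1)\cdots\alpha_n(x_n)\ne0$. $U$ is the universal enveloping algebra of the Lie–Rinehart algebra $(S,L)$, in which $[\alpha,s]=\alpha(s)$ for $\alpha\in L$, $s\in S$. For $I=(i_n,\ldots,i_1)\in\mathbb{N}^n$, $\alpha^I=\alpha_n^{i_n}\cdots\alpha_1^{i_1}$ and $|I|=\sum i_m$; these form a left $S$-basis of $U$, and $F_pU$ is the $S$-span of $\alpha^I$ with $|I|\le p$ ($F_pU=0$ for $p<0$). With $W=\operatorname{span}_k(x_1,\ldots,x_n)$ and dual basis $\hat x_1,\ldots,\hat x_n$, $\mathcal{X}^1=U\otimes_k W^*$, with elements $\sum_k u_k\hat x_k$; $d^0:U\to\mathcal{X}^1$ is $d^0(u)=\sum_{k=1}^n[u,x_k]\hat x_k$; and $F_p\mathcal{X}^1$ is the $k$-span of $f\alpha^I\hat x_k$ with $f\in S$, $|I|\le p$. *)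

(* Defs.v *)
From HB Require Import structures.
From mathcomp Require Import all_boot all_order all_algebra.
From mathcomp Require Import mpoly.
Set Implicit Arguments. Unset Strict Implicit. Unset Printing Implicit Defensive.
Import Order.TTheory GRing.Theory Num.Theory.
Local Open Scope ring_scope.

(* S = k[x_1,...,x_n] is {mpoly k[n]}; x_j is 'X_j (indices 0..n-1). *)

Definition isDer (k : fieldType) (n : nat) (D : {mpoly k[n]} -> {mpoly k[n]}) : Prop :=
  [/\ forall a b, D (a + b) = D a + D b,
      forall (c : k) a, D (c *: a) = c *: D a
    & forall a b, D (a * b) = a * D b + D a * b].

Definition bracket (k : fieldType) (n : nat) (D E : {mpoly k[n]} -> {mpoly k[n]}) :=
  fun s => D (E s) - E (D s).

Definition inL (k : fieldType) (n : nat) (alpha : 'I_n -> {mpoly k[n]} -> {mpoly k[n]})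
  (D : {mpoly k[n]} -> {mpoly k[n]}) : Prop :=
  exists c : 'I_n -> {mpoly k[n]}, forall s, D s = \sum_(i < n) c i * alpha i s.

Definition triangularizable (k : fieldType) (n : nat)
  (alpha : 'I_n -> {mpoly k[n]} -> {mpoly k[n]}) : Prop :=
  [/\ forall i, isDer (alpha i),
      (* alpha is S-linearly independent, i.e. a basis of the free S-module L *)
      forall c : 'I_n -> {mpoly k[n]},
        (forall s, \sum_(i < n) c i * alpha i s = 0) -> forall i, c i = 0,
      forall i j, inL alpha (bracket (alpha i) (alpha j)),
      forall i j : 'I_n, (j < i)%N -> alpha i 'X_j = 0
    & \prod_(i < n) alpha i 'X_i != 0].

Definition LR_relations (k : fieldType) (n : nat)
  (alpha : 'I_n -> {mpoly k[n]} -> {mpoly k[n]}) (A : pzRingType)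
  (fS : {mpoly k[n]} -> A) (fL : ({mpoly k[n]} -> {mpoly k[n]}) -> A) : Prop :=
  [/\ forall D E, inL alpha D -> inL alpha E ->
        fL (fun s => D s + E s) = fL D + fL E,
      forall (f : {mpoly k[n]}) D, inL alpha D ->
        fL (fun s => f * D s) = fS f * fL D,
      forall D E, inL alpha D -> inL alpha E ->
        fL (bracket D E) = fL D * fL E - fL E * fL D
    & forall D (s : {mpoly k[n]}), inL alpha D ->
        fL D * fS s - fS s * fL D = fS (D s)].

Definition is_LR_envelope (k : fieldType) (n : nat)
  (alpha : 'I_n -> {mpoly k[n]} -> {mpoly k[n]}) (U : pzRingType)
  (iS : {rmorphism {mpoly k[n]} -> U}) (iL : ({mpoly k[n]} -> {mpoly k[n]}) -> U) : Prop :=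
  LR_relations alpha iS iL /\
  forall (A : pzRingType) (fS : {rmorphism {mpoly k[n]} -> A})
         (fL : ({mpoly k[n]} -> {mpoly k[n]}) -> A),
    LR_relations alpha fS fL ->
    (exists Phi : {rmorphism U -> A},
        (forall s, Phi (iS s) = fS s) /\
        (forall D, inL alpha D -> Phi (iL D) = fL D)) /\
    (forall Phi1 Phi2 : {rmorphism U -> A},
        (forall s, Phi1 (iS s) = Phi2 (iS s)) ->
        (forall D, inL alpha D -> Phi1 (iL D) = Phi2 (iL D)) ->
        forall u, Phi1 u = Phi2 u).

(* alpha^I = alpha_n^{i_n} ... alpha_1^{i_1} in U, for a multi-index I. *)
Definition alpha_mon (k : fieldType) (n : nat)
  (alpha : 'I_n -> {mpoly k[n]} -> {mpoly k[n]}) (U : pzRingType)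
  (iL : ({mpoly k[n]} -> {mpoly k[n]}) -> U) (I : 'I_n -> nat) : U :=
  \prod_(i < n) iL (alpha (rev_ord i)) ^+ I (rev_ord i).

(* u in F_p U: u is a left S-combination of alpha^I with |I| <= p;
   F_p U = 0 for p < 0. (Multi-indices with |I| <= p have entries <= p.) *)
Definition inF (k : fieldType) (n : nat)
  (alpha : 'I_n -> {mpoly k[n]} -> {mpoly k[n]}) (U : pzRingType)
  (iS : {rmorphism {mpoly k[n]} -> U}) (iL : ({mpoly k[n]} -> {mpoly k[n]}) -> U)
  (p : int) (u : U) : Prop :=
  match p with
  | Posz m => exists f : {ffun 'I_n -> 'I_m.+1} -> {mpoly k[n]},
      u = \sum_(I : {ffun 'I_n -> 'I_m.+1} | (\sum_(i < n) (I i : nat) <= m)%N)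
            iS (f I) * alpha_mon alpha iL (fun i => (I i : nat))
  | Negz _ => u = 0
  end.

(* X^1 = U (x) W^*, an element sum_k u_k xhat_k is the family (u_k)_k. *)
Definition d0 (k : fieldType) (n : nat) (U : pzRingType)
  (iS : {rmorphism {mpoly k[n]} -> U}) (u : U) : 'I_n -> U :=
  fun j => u * iS 'X_j - iS 'X_j * u.

(* F_p X^1 = k-span of f alpha^I xhat_k, |I| <= p, i.e. sum_k F_pU xhat_k. *)
Definition inFX (k : fieldType) (n : nat)
  (alpha : 'I_n -> {mpoly k[n]} -> {mpoly k[n]}) (U : pzRingType)
  (iS : {rmorphism {mpoly k[n]} -> U}) (iL : ({mpoly k[n]} -> {mpoly k[n]}) -> U)
  (p : int) (w : 'I_n -> U) : Prop :=
  forall j, inF alpha iS iL p (w j).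

(* Main.v *)
From HB Require Import structures.
From mathcomp Require Import all_boot all_order all_algebra.
From mathcomp Require Import mpoly.
From mathcomp Require Import boolp.
From mathcomp Require Import zify ring.
Require Import Defs.
Import Order.TTheory GRing.Theory Num.Theory.
Set Implicit Arguments. Unset Strict Implicit. Unset Printing Implicit Defensive.
Local Open Scope ring_scope.

Section Gen.
Variables (k : fieldType) (n : nat) (alpha : 'I_n -> {mpoly k[n]} -> {mpoly k[n]}).
Variables (A : pzRingType) (fS : {rmorphism {mpoly k[n]} -> A})
  (fL : ({mpoly k[n]} -> {mpoly k[n]}) -> A).
Hypothesis rel : forall i (s : {mpoly k[n]}),
  fL (alpha i) * fS s - fS s * fL (alpha i) = fS (alpha i s).

Definition cm (j : 'I_n) (T : A) := T * fS 'X_j - fS 'X_j * T.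
Definition comms (js : seq 'I_n) (T : A) := foldl (fun T j => cm j T) T js.
Definition O (m : nat) (T : A) := forall js, size js = m -> comms js T = 0.

Lemma cmD j T1 T2 : cm j (T1 + T2) = cm j T1 + cm j T2.
Proof. by rewrite /cm mulrDl mulrDr opprD addrACA. Qed.
Lemma cm0 j : cm j 0 = 0.
Proof. by rewrite /cm mul0r mulr0 subr0. Qed.
Lemma cmN j T : cm j (- T) = - cm j T.
Proof. by apply/eqP; rewrite -subr_eq0 opprK -cmD addNr cm0. Qed.
Lemma cmM j T T' : cm j (T * T') = cm j T * T' + T * cm j T'.
Proof.
by rewrite /cm mulrBl mulrBr !mulrA [RHS]addrC addrA subrK.
Qed.
Lemma cm_fS j c : cm j (fS c) = 0.
Proof. by rewrite /cm -!rmorphM mulrC subrr. Qed.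
Lemma cm_D j i : cm j (fL (alpha i)) = fS (alpha i 'X_j).
Proof. exact: rel. Qed.

Lemma comms_rcons js j T : comms (rcons js j) T = cm j (comms js T).
Proof. by rewrite /comms foldl_rcons. Qed.
Lemma comms0 js : comms js 0 = 0.
Proof. by elim: js => //= j js IH; rewrite cm0. Qed.
Lemma commsD js T1 T2 : comms js (T1 + T2) = comms js T1 + comms js T2.
Proof. by elim: js T1 T2 => //= j js IH T1 T2; rewrite cmD IH. Qed.
Lemma commsN js T : comms js (- T) = - comms js T.
Proof. by elim: js T => //= j js IH T; rewrite cmN IH. Qed.
Lemma comms_sum (I : Type) (r : seq I) (P : pred I) (F : I -> A) js :
  comms js (\sum_(i <- r | P i) F i) = \sum_(i <- r | P i) comms js (F i).
Proof. exact: (big_morph _ (commsD js) (comms0 js)). Qed.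
Lemma comms_fSl js c T : comms js (fS c * T) = fS c * comms js T.
Proof. by elim: js T => //= j js IH T; rewrite cmM cm_fS mul0r add0r IH. Qed.

Lemma O0 m : O m 0.
Proof. by move=> js _; rewrite comms0. Qed.
Lemma OD m T1 T2 : O m T1 -> O m T2 -> O m (T1 + T2).
Proof. by move=> h1 h2 js hs; rewrite commsD h1 // h2 // addr0. Qed.
Lemma ON m T : O m T -> O m (- T).
Proof. by move=> h js hs; rewrite commsN h // oppr0. Qed.
Lemma OB m T1 T2 : O m T1 -> O m T2 -> O m (T1 - T2).
Proof. by move=> h1 h2; apply: OD => //; apply: ON. Qed.
Lemma O_sum m (I : Type) (r : seq I) (P : pred I) (F : I -> A) :
  (forall i, P i -> O m (F i)) -> O m (\sum_(i <- r | P i) F i).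
Proof. by move=> h; apply: (big_ind (O m)) => //; [exact: O0 | exact: OD]. Qed.
Lemma O_sum_seq m (I : eqType) (r : seq I) (F : I -> A) :
  (forall i, i \in r -> O m (F i)) -> O m (\sum_(i <- r) F i).
Proof. by move=> h; rewrite big_seq; apply: O_sum. Qed.
Lemma O_fSl m c T : O m T -> O m (fS c * T).
Proof. by move=> h js hs; rewrite comms_fSl h // mulr0. Qed.
Lemma O_0E T : O 0 T -> T = 0.
Proof. by move=> h; apply: (h [::]). Qed.
Lemma O_S m T : O m.+1 T <-> forall j, O m (cm j T).
Proof.
split=> [h j js hs | h [|j js] //= hs]; first by apply: (h (j :: js)); rewrite /= hs.
by apply: h; case: hs.
Qed.
Lemma O_mono m T : O m T -> O m.+1 T.
Proof.
move=> h js; case/lastP: js => // js j; rewrite size_rcons => -[hs].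
by rewrite comms_rcons h // cm0.
Qed.
Lemma O_le m m' T : (m <= m')%N -> O m T -> O m' T.
Proof.
move/subnK <-; elim: (m' - m)%N => // d IH h; rewrite addSn; exact/O_mono/IH.
Qed.
Lemma O_mul a b T T' : O a.+1 T -> O b.+1 T' -> O (a + b).+1 (T * T').
Proof.
have main : forall s a b T T', (a + b = s)%N -> O a.+1 T -> O b.+1 T' ->
    O (a + b).+1 (T * T').
  elim=> [|s IH] {}a {}b {}T {}T' Hs HT HT'; apply/O_S => j; rewrite cmM;
    move/O_S: (HT) => /(_ j) HTj; move/O_S: (HT') => /(_ j) HTj'.
  - move: HTj HTj'; have -> : a = 0%N by lia. have -> : b = 0%N by lia. move=> HTj HTj'.
    by rewrite (O_0E HTj) (O_0E HTj') mul0r mulr0 addr0; apply: O0.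
  - apply: OD.
    + case: a Hs HT HTj => [|a] Hs HT HTj; first by rewrite (O_0E HTj) mul0r; apply: O0.
      rewrite addSn; apply: IH => //; lia.
    + case: b Hs HT' HTj' => [|b] Hs HT' HTj'; first by rewrite (O_0E HTj') mulr0; apply: O0.
      rewrite addnS; apply: IH => //; lia.
by move=> ?? ; apply: main.
Qed.
Lemma O_fS c : O 1 (fS c).
Proof. by apply/O_S => j; rewrite cm_fS; apply: O0. Qed.
Lemma O_D i : O 2 (fL (alpha i)).
Proof. by apply/O_S => j; rewrite cm_D; apply: O_fS. Qed.
Lemma O_Dl i m R : O m R -> O m.+1 (fL (alpha i) * R).
Proof.
case: m => [h|m h]; first by rewrite (O_0E h) mulr0; apply: O0.
exact: (O_mul (O_D i) h).
Qed.

Definition Dw (w : seq 'I_n) : A := foldr (fun i T => fL (alpha i) * T) 1 w.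
Lemma O_Dw w : O (size w).+1 (Dw w).
Proof.
elim: w => [|i w IH] /=; first by rewrite -(rmorph1 fS); apply: O_fS.
exact: (O_mul (O_D i) IH).
Qed.

Fixpoint picks (w : seq 'I_n) : seq ('I_n * seq 'I_n) :=
  if w is i :: t then (i, t) :: [seq (x.1, i :: x.2) | x <- picks t] else [::].

Lemma picks_prop w x : x \in picks w -> size w = (size x.2).+1 /\ perm_eq w (x.1 :: x.2).
Proof.
elim: w x => [|i t IH] x //=; rewrite inE => /orP[/eqP -> //|].
case/mapP => y /IH [hs /permP hp] -> /=; split; first by rewrite hs.
by apply/permP => P /=; rewrite hp /= addnCA.
Qed.

Lemma picks_fst w : map fst (picks w) = w.
Proof. by elim: w => //= i t IH; rewrite -map_comp /=; congr (_ :: _). Qed.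

Fixpoint C (w js : seq 'I_n) : {mpoly k[n]} :=
  if js is j :: js' then \sum_(x <- picks w) alpha x.1 'X_j * C x.2 js'
  else (w == [::])%:R.


Lemma cm_Dw j w : O (size w).-1
  (cm j (Dw w) - \sum_(x <- picks w) fS (alpha x.1 'X_j) * Dw x.2).
Proof.
elim: w => [|i t IH] /=.
  by rewrite big_nil subr0 -(rmorph1 fS) cm_fS; apply: O0.
set R := _ - _ in IH.
have -> : cm j (fL (alpha i) * Dw t) -
   \sum_(x <- (i, t) :: [seq (x.1, i :: x.2) | x <- picks t]) fS (alpha x.1 'X_j) * Dw x.2
   = fL (alpha i) * R + \sum_(x <- picks t) fS (alpha i (alpha x.1 'X_j)) * Dw x.2.
  rewrite big_cons big_map /= cmM cm_D /R [in RHS]mulrBr [in RHS]mulr_sumr.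
  under [X in _ = _ + X]eq_bigr => x _ do rewrite -rel mulrBl -!mulrA.
  by rewrite sumrB [in LHS]opprD addrACA subrr add0r [in RHS]addrA subrK.
apply: OD.
  by case: (size t) IH => [|m] IH /=; [rewrite (O_0E IH) mulr0; apply: O0 | exact: O_Dl].
apply: O_sum_seq => x /picks_prop [-> _]; apply: O_fSl; exact: O_Dw.
Qed.

Lemma comms_Dw js w : size js = size w -> comms js (Dw w) = fS (C w js).
Proof.
elim: js w => [|j js IH] w /=.
  by case: w => // _; rewrite rmorph1.
move=> hs; pose R := cm j (Dw w) - \sum_(x <- picks w) fS (alpha x.1 'X_j) * Dw x.2.
have -> : cm j (Dw w) = \sum_(x <- picks w) fS (alpha x.1 'X_j) * Dw x.2 + R by rewrite /R addrC subrK.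
rewrite commsD (@cm_Dw j w js); last by rewrite -hs.
rewrite addr0 comms_sum rmorph_sum.
apply: eq_big_seq => x /picks_prop [hx _]; rewrite comms_fSl IH ?rmorphM //.
by move: hs; rewrite hx => -[].
Qed.

End Gen.

Section Calg.
Variables (k : fieldType) (n : nat) (alpha : 'I_n -> {mpoly k[n]} -> {mpoly k[n]}).
Hypothesis tri : forall i j : 'I_n, (j < i)%N -> alpha i 'X_j = 0.
Local Notation C := (C alpha).

Definition wsum (w : seq 'I_n) := (\sum_(i <- w) (i : nat))%N.
Fixpoint Nf (js : seq 'I_n) : nat :=
  if js is j :: js' then ((count_mem j js').+1 * Nf js')%N else 1%N.

Lemma picks_wsum w x : x \in picks w -> wsum w = (x.1 + wsum x.2)%N.
Proof. by case/picks_prop => _ hp; rewrite /wsum (perm_big _ hp) big_cons. Qed.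

Lemma C_le js w : C w js != 0 -> (wsum w <= wsum js)%N.
Proof.
elim: js w => [|j js IH] w /=.
  by case: w => //= ? ?; rewrite eqxx.
move=> hC.
have [x xin nz] : exists2 x, x \in picks w & alpha x.1 'X_j * C x.2 js != 0.
  case: (boolP (has (fun x => alpha x.1 'X_j * C x.2 js != 0) (picks w))) => [/hasP//|/hasPn h].
  by move: hC; rewrite big1_seq ?eqxx // => x /h; rewrite negbK => /eqP.
have ha : alpha x.1 'X_j != 0 by apply: contraNneq nz => ->; rewrite mul0r.
have hc : C x.2 js != 0 by apply: contraNneq nz => ->; rewrite mulr0.
have hle : (x.1 <= j)%N by rewrite leqNgt; apply: contraNN ha => /tri ->.
rewrite (picks_wsum xin) /wsum big_cons; exact: leq_add (IH _ hc).
Qed.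

Lemma C_eq js w : wsum w = wsum js ->
  C w js = (perm_eq w js)%:R * (Nf js)%:R * \prod_(j <- js) alpha j 'X_j.
Proof.
elim: js w => [|j js IH] w /=.
  move=> _; rewrite big_nil !mulr1.
  by case: (boolP (perm_eq w [::])) => [/perm_nilP -> //|]; case: w.
move=> hw.
have hj : wsum (j :: js) = (j + wsum js)%N by rewrite /wsum big_cons.
pose c := (perm_eq w (j :: js))%:R * (Nf js)%:R * (alpha j 'X_j * \prod_(j <- js) alpha j 'X_j).
transitivity (\sum_(x <- picks w) (x.1 == j)%:R * c).
  apply: eq_big_seq => x xin; have hx := picks_wsum xin.
  case: (ltngtP x.1 j) => h.
  - have : ~~ (wsum x.2 <= wsum js)%N.
      by rewrite -ltnNge; move: hw; rewrite hx hj; lia.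
    move/(contra (@C_le js x.2)); rewrite negbK => /eqP ->.
    by rewrite mulr0 (_ : (x.1 == j) = false) ?mul0r //; apply/negbTE; rewrite neq_ltn h.
  - by rewrite tri // mul0r (_ : (x.1 == j) = false) ?mul0r //; apply/negbTE; rewrite neq_ltn h orbT.
  - have h' : x.1 = j by apply: val_inj.
    rewrite IH; last by move: hw; rewrite hx hj h => /addnI.
    have -> : perm_eq x.2 js = perm_eq w (j :: js).
      by case/picks_prop: xin => _ /permPl ->; rewrite h' perm_cons.
    by rewrite h' eqxx /c mul1r mulrCA mulrA.
rewrite -big_distrl /= -natr_sum.
have -> : (\sum_(x <- picks w) (x.1 == j))%N = count_mem j w.
  rewrite -sum1_count big_mkcond /= -{2}(picks_fst w) big_map.
  by rewrite [RHS]big_mkcond; apply: eq_bigr => x _; case: (x.1 == j).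
rewrite /c big_cons.
case: (boolP (perm_eq w (j :: js))) => hp; last by rewrite !mul0r mulr0.
by rewrite (permP hp) /= eqxx natrM add1n !mul1r mulrA.
Qed.

End Calg.

Section Rep.
Variables (k : fieldType) (n : nat).
Local Notation S := {mpoly k[n]}.

Record endo := Endo { ef :> S -> S ; _ : forall a b, ef (a + b) = ef a + ef b }.
HB.instance Definition _ := gen_eqMixin endo.
HB.instance Definition _ := gen_choiceMixin endo.

Lemma endo_ext (f g : endo) : (forall x, f x = g x) -> f = g.
Proof.
case: f g => f hf [g hg] /= h; have e := funext h; subst g.
by congr Endo; apply: Prop_irrelevance.
Qed.

Definition e0 : endo := @Endo (fun _ => 0) (fun _ _ => esym (addr0 0)).
Lemma eadd_proof (f g : endo) a b : f (a + b) + g (a + b) = (f a + g a) + (f b + g b).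
Proof. by case: f g => f hf [g hg] /=; rewrite hf hg addrACA. Qed.
Definition eadd (f g : endo) : endo := @Endo (fun x => f x + g x) (eadd_proof f g).
Lemma eopp_proof (f : endo) a b : - f (a + b) = - f a + - f b.
Proof. by case: f => f hf /=; rewrite hf opprD. Qed.
Definition eopp (f : endo) : endo := @Endo (fun x => - f x) (eopp_proof f).
Definition e1 : endo := @Endo id (fun _ _ => erefl).
Lemma emul_proof (f g : endo) a b : f (g (a + b)) = f (g a) + f (g b).
Proof. by case: f g => f hf [g hg] /=; rewrite hg hf. Qed.
Definition emul (f g : endo) : endo := @Endo (fun x => f (g x)) (emul_proof f g).

Lemma eaddA : associative eadd. Proof. by move=> f g h; apply: endo_ext => x /=; rewrite addrA. Qed.
Lemma eaddC : commutative eadd. Proof. by move=> f g; apply: endo_ext => x /=; rewrite addrC. Qed.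
Lemma eadd0 : left_id e0 eadd. Proof. by move=> f; apply: endo_ext => x /=; rewrite add0r. Qed.
Lemma eaddN : left_inverse e0 eopp eadd. Proof. by move=> f; apply: endo_ext => x /=; rewrite addNr. Qed.
Lemma emulA : associative emul. Proof. by move=> f g h; apply: endo_ext. Qed.
Lemma emul1 : left_id e1 emul. Proof. by move=> f; apply: endo_ext. Qed.
Lemma emulr1 : right_id e1 emul. Proof. by move=> f; apply: endo_ext. Qed.
Lemma emulDl : left_distributive emul eadd. Proof. by move=> f g h; apply: endo_ext. Qed.
Lemma emulDr : right_distributive emul eadd.
Proof. by move=> [f hf] g h; apply: endo_ext => x /=; rewrite hf. Qed.

HB.instance Definition _ := GRing.isPzRing.Build endo eaddA eaddC eadd0 eaddN
  emulA emul1 emulr1 emulDl emulDr.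

Lemma endo_addE (f g : endo) x : (f + g) x = f x + g x. Proof. by []. Qed.
Lemma endo_oppE (f : endo) x : (- f) x = - f x. Proof. by []. Qed.
Lemma endo_mulE (f g : endo) x : (f * g) x = f (g x). Proof. by []. Qed.
Lemma endo_0E x : (0 : endo) x = 0. Proof. by []. Qed.

Definition mS (s : S) : endo := @Endo (fun x => s * x) (fun a b => mulrDr s a b).
Lemma mS_zmod : zmod_morphism mS.
Proof. by move=> a b; apply: endo_ext => x /=; rewrite mulrBl. Qed.
HB.instance Definition _ := GRing.isZmodMorphism.Build S endo mS mS_zmod.
Lemma mS_monoid : monoid_morphism mS.
Proof. by split; [apply: endo_ext => x /=; rewrite mul1r | move=> a b; apply: endo_ext => x /=; rewrite mulrA]. Qed.
HB.instance Definition _ := GRing.isMonoidMorphism.Build S endo mS mS_monoid.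

Definition mL (D : S -> S) : endo :=
  match pselect (forall a b, D (a + b) = D a + D b) with
  | left h => @Endo D h
  | right _ => 0
  end.
Lemma mLE D (h : forall a b, D (a + b) = D a + D b) x : mL D x = D x.
Proof. by rewrite /mL; case: pselect. Qed.

Variable alpha : 'I_n -> S -> S.
Hypothesis der : forall i, isDer (alpha i).

Lemma inL_add D : inL alpha D -> forall a b, D (a + b) = D a + D b.
Proof.
case=> c hc a b; rewrite !hc -big_split; apply: eq_bigr => i _.
by case: (der i) => -> _ _; rewrite mulrDr.
Qed.
Lemma inL_leib D : inL alpha D -> forall a b, D (a * b) = a * D b + D a * b.
Proof.
case=> c hc a b; rewrite !hc mulr_sumr mulr_suml -big_split; apply: eq_bigr => i _.
by case: (der i) => _ _ ->; rewrite mulrDr [c i * (a * _)]mulrCA [c i * (_ * b)]mulrA.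
Qed.

Lemma LR_endo : LR_relations alpha mS mL.
Proof.
split.
- move=> D E hD hE; apply: endo_ext => x.
  rewrite mLE ?endo_addE ?mLE //; [exact: inL_add | exact: inL_add |].
  by move=> a b; rewrite (inL_add hD) (inL_add hE) addrACA.
- move=> f D hD; apply: endo_ext => x.
  rewrite mLE ?endo_mulE ?mLE //=; first exact: inL_add.
  by move=> a b; rewrite (inL_add hD) mulrDr.
- move=> D E hD hE; apply: endo_ext => x.
  rewrite mLE ?endo_addE ?endo_oppE ?endo_mulE ?mLE //; try exact: inL_add.
  by move=> a b; rewrite /bracket (inL_add hD) (inL_add hE) (inL_add hD) (inL_add hE) opprD addrACA.
- move=> D s hD; apply: endo_ext => x.
  rewrite endo_addE endo_oppE !endo_mulE /= !mLE; try exact: inL_add.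
  by rewrite (inL_leib hD) addrAC subrr add0r.
Qed.

Lemma iS_inj (U : pzRingType) (iS : {rmorphism S -> U}) iL :
  is_LR_envelope alpha iS iL -> forall s, iS s = 0 -> s = 0.
Proof.
case=> _ univ s hs.
have [[Phi [hPhi _]] _] := univ _ mS mL LR_endo.
have : mS s = 0 by rewrite -hPhi hs rmorph0.
by move/(congr1 (fun f : endo => f 1)) => /=; rewrite mulr1.
Qed.

End Rep.


Section Mon.
Variables (k : fieldType) (n : nat) (alpha : 'I_n -> {mpoly k[n]} -> {mpoly k[n]}).
Variables (A : pzRingType) (fL : ({mpoly k[n]} -> {mpoly k[n]}) -> A).

Definition wI (I : 'I_n -> nat) : seq 'I_n :=
  flatten [seq nseq (I (rev_ord i)) (rev_ord i) | i <- index_enum 'I_n].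

Lemma Dw_cat s1 s2 : Dw alpha fL (s1 ++ s2) = Dw alpha fL s1 * Dw alpha fL s2.
Proof. by elim: s1 => [|i s IH] /=; rewrite ?mul1r // IH mulrA. Qed.
Lemma Dw_nseq m i : Dw alpha fL (nseq m i) = fL (alpha i) ^+ m.
Proof. by elim: m => [|m IH] //=; rewrite IH exprS. Qed.

Lemma alpha_monE I : alpha_mon alpha fL I = Dw alpha fL (wI I).
Proof.
rewrite /alpha_mon /wI; elim: (index_enum _) => [|i r IH]; first by rewrite big_nil.
by rewrite big_cons /= Dw_cat Dw_nseq IH.
Qed.

Lemma alpha_mon_ext I I' : (forall i, I i = I' i) -> alpha_mon alpha fL I = alpha_mon alpha fL I'.
Proof. by move=> h; apply: eq_bigr => i _; rewrite h. Qed.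

Lemma size_wI I : size (wI I) = (\sum_(i < n) I i)%N.
Proof.
rewrite (reindex_inj rev_ord_inj) /= /wI; elim: (index_enum _) => [|i r IH]; first by rewrite big_nil.
by rewrite big_cons /= size_cat size_nseq IH.
Qed.

Lemma count_wI I m : count_mem m (wI I) = I m.
Proof.
have -> : count_mem m (wI I) = (\sum_(i < n) ((rev_ord i == m) * I (rev_ord i)))%N.
  rewrite /wI; elim: (index_enum _) => [|i r IH]; first by rewrite big_nil.
  by rewrite big_cons /= count_cat count_nseq IH.
rewrite -(reindex_inj rev_ord_inj (P := xpredT) (F := fun i => ((i == m) * I i)%N)) /=.
by rewrite (bigD1 m) //= eqxx mul1n big1 ?addn0 // => i /negbTE ->.
Qed.
End Mon.

Lemma Nf_gt0 n (js : seq 'I_n) : (0 < Nf js)%N.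
Proof. by elim: js => //= j js IH; rewrite muln_gt0 IH. Qed.

Unset Implicit Arguments.

Theorem proposition3p2 (k : fieldType) (n : nat)
  (alpha : 'I_n -> {mpoly k[n]} -> {mpoly k[n]})
  (U : pzRingType) (iS : {rmorphism {mpoly k[n]} -> U})
  (iL : ({mpoly k[n]} -> {mpoly k[n]}) -> U) (p : nat) (u : U) :
  [pchar k] =i pred0 ->
  (1 <= n)%N ->
  triangularizable alpha ->
  is_LR_envelope alpha iS iL ->
  (0 < p)%N ->
  inF alpha iS iL p%:Z u ->
  inFX alpha iS iL (p%:Z - 2) (d0 iS u) ->
  inF alpha iS iL (p%:Z - 1) u.
Proof.
move=> char0 n1 [der indep lie tri prodnz] env p0 hu hd.
have rel : forall i s, iL (alpha i) * iS s - iS s * iL (alpha i) = iS (alpha i s).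
  move=> i s; case: env => -[_ _ _ h] _; apply: h.
  exists (fun j => (j == i)%:R) => t.
  by rewrite (bigD1 i) //= eqxx mul1r big1 ?addr0 // => j /negbTE ->; rewrite mul0r.
have diag : forall i, alpha i 'X_i != 0 by move=> i; move/prodf_neq0: prodnz; apply.
have inj := iS_inj der env.
have FO : forall m v, inF alpha iS iL (Posz m) v -> O iS m.+1 v.
  move=> m v [g ->]; apply: O_sum => I hI; apply: O_fSl.
  rewrite alpha_monE; have h := @O_Dw _ _ alpha _ iS iL rel (wI (fun i => I i : nat)).
  by apply: O_le h; rewrite ltnS size_wI.
case: p p0 hu hd => // q _ hu hd.
have uO : O iS q.+1 u.
  apply/O_S => j; have := hd j.
  case: q hu {hd} => [|r] hu.
    rewrite (_ : (1%:Z - 2)%R = Negz 0) // => h.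
    by have e : cm iS j u = 0 := h; rewrite e; apply: O0.
  by rewrite (_ : (r.+2%:Z - 2)%R = r%:Z); [exact: FO | lia].
case: hu => f hu.
have top : forall I : {ffun 'I_n -> 'I_q.+2}, (\sum_(i < n) (I i : nat))%N = q.+1 -> f I = 0.
  move=> I0 hI0; apply/eqP; apply/negPn/negP => hf0.
  pose P (I : {ffun 'I_n -> 'I_q.+2}) := ((\sum_(i < n) (I i : nat))%N == q.+1) && (f I != 0).
  have PI0 : P I0 by rewrite /P hI0 eqxx.
  case: (arg_minnP (fun I : {ffun 'I_n -> 'I_q.+2} => wsum (wI (fun i => I i : nat))) PI0)
    => Is /andP [hs hfs] hmin.
  set ws := wI (fun i => Is i : nat).
  have hws : size ws = q.+1 by rewrite size_wI (eqP hs).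
  have := uO ws hws.
  rewrite hu comms_sum.
  have E : forall I : {ffun 'I_n -> 'I_q.+2}, (\sum_(i<n) (I i:nat) <= q.+1)%N ->
     comms iS ws (iS (f I) * alpha_mon alpha iL (fun i => I i : nat)) =
     iS (f I * (if (\sum_(i<n) (I i:nat) == q.+1)%N then C alpha (wI (fun i => I i : nat)) ws else 0)).
    move=> I hI; rewrite comms_fSl alpha_monE rmorphM; congr (_ * _).
    case: eqP => h.
      by rewrite (comms_Dw rel) // size_wI h hws.
    rewrite rmorph0; have h2 := @O_Dw _ _ alpha _ iS iL rel (wI (fun i => I i : nat)).
    by apply: (O_le _ h2 hws); rewrite size_wI; lia.
  rewrite (eq_bigr _ E) -rmorph_sum => /inj.
  rewrite (bigD1 Is) /=; last by rewrite (eqP hs).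
  rewrite hs big1 ?addr0.
    apply/eqP; apply: mulf_neq0 => //.
    rewrite (C_eq tri) // perm_refl mul1r; apply: mulf_neq0.
      rewrite -mpolyC_nat mpolyC_eq0 natf_neq0_pchar /pnat Nf_gt0 /=.
      by apply/allP => r _; move: (char0 r); rewrite !inE /= => ->.
    by rewrite prodf_seq_neq0; apply/allP => i _; apply: diag.
  move=> I /andP [hI hne].
  case: eqP => h; last by rewrite mulr0.
  case: (eqVneq (f I) 0) => [-> | hfI]; first by rewrite mul0r.
  case: (eqVneq (C alpha (wI (fun i => I i : nat)) ws) 0) => [-> | hC]; first by rewrite mulr0.
  exfalso; have le := C_le tri hC.
  have hPI : P I by rewrite /P h eqxx.
  have eqw : wsum (wI (fun i => I i : nat)) = wsum ws by apply/eqP; rewrite eqn_leq le hmin.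
  move: hC; rewrite (C_eq tri eqw).
  case: (boolP (perm_eq _ _)) => hp; last by rewrite !mul0r eqxx.
  move=> _; move/negP: hne; apply; apply/eqP/ffunP => i; apply: val_inj.
  by have := permP hp (pred1 i); rewrite !count_wI.
rewrite (_ : (q.+1%:Z - 1)%R = q%:Z); last by lia.
pose wid (J : {ffun 'I_n -> 'I_q.+1}) : {ffun 'I_n -> 'I_q.+2} := [ffun i => widen_ord (leqnSn q.+1) (J i)].
pose nar (I : {ffun 'I_n -> 'I_q.+2}) : {ffun 'I_n -> 'I_q.+1} := [ffun i => inord (I i)].
exists (fun J => f (wid J)).
rewrite hu.
transitivity (\sum_(I : {ffun 'I_n -> 'I_q.+2} | (\sum_(i < n) (I i:nat) <= q)%N)
                iS (f I) * alpha_mon alpha iL (fun i => I i : nat)).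
  rewrite [LHS]big_mkcond [RHS]big_mkcond; apply: eq_bigr => I _.
  have [h|h] := leqP (\sum_(i < n) (I i:nat)) q; first by rewrite (leqW h).
  case: (eqVneq (\sum_(i < n) (I i:nat)) q.+1) => [e|ne]; first by rewrite e leqnn top // rmorph0 mul0r.
  by rewrite leqNgt ltn_neqAle eq_sym ne h.
rewrite (reindex_onto wid nar) /=.
  apply: eq_big => J.
    rewrite (eq_bigr (fun i => (J i : nat))); last by move=> i _; rewrite ffunE.
    have -> : nar (wid J) = J by apply/ffunP => i; apply: val_inj; rewrite !ffunE /= inordK.
    by rewrite eqxx andbT.
  move=> _; congr (_ * _); apply: alpha_mon_ext => i; by rewrite ffunE.
move=> I hI; apply/ffunP => i; apply: val_inj; rewrite !ffunE /= inordK //.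
rewrite ltnS; apply: leq_trans hI; rewrite (bigD1 i) //=; exact: leq_addr.
Qed.
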